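(* Let $n\ge1$ and let $X,Y$ be distinct elements of the group completion $K(\widetilde{Sp}(\mathbb{R}^n\times\mathbb{R}^n))$. Then there exists $(\mathbf a,\mathbf b)\in\mathbb{N}_+^n\times\mathbb{N}^n$ with $\varphi_X(p_{\mathbf a,\mathbf b})\neq\varphi_Y(p_{\mathbf a,\mathbf b})$.
   Context: A pair $(\mathbf z,\mathbf z')\in\mathbb{R}^n\times\mathbb{R}^n$ is degenerate if $z_j=z'_j$ for some $j$. $\widetilde{Sp}(\mathbb{R}^n\times\mathbb{R}^n)$ is the commutative monoid (under multiset union) of finite multisets of points of $\mathbb{R}^n\times\mathbb{R}^n$ modulo the equivalence relation generated by adding or removing degenerate pairs. Its group completion $K(\widetilde{Sp}(\mathbb{R}^n\times\mathbb{R}^n))$ consists of pairs $(X_+,X_-)$ modulo $(X_+,X_-)\sim(Y_+,Y_-)$ iff $X_++Y_-=Y_++X_-$. For $\mathbf a\in\mathbb{N}_+^n$ (all $a_j\ge1$), $\mathbf b\in\mathbb{N}^n$ and a multiset $X=\{(\mathbf x_i,\mathbf y_i)\}_{i=1}^r$, $p_{\mathbf a,\mathbf b}(X)=\sum_{i=1}^r\prod_{j=1}^n(y_{ij}-x_{ij})^{a_j}(y_{ij}+x_{ij})^{b_j}$, which is well defined on $\widetilde{Sp}$. For $X=(X_+,X_-)$, $\varphi_X(p_{\mathbf a,\mathbf b})=p_{\mathbf a,\mathbf b}(X_+)-p_{\mathbf a,\mathbf b}(X_-)$ (well defined on classes). *)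

(* Defs.v *)
From mathcomp Require Import all_boot.
From Stdlib Require Import Reals List Permutation.
Set Implicit Arguments. Unset Strict Implicit. Unset Printing Implicit Defensive.

Definition pt (n : nat) : Type := (('I_n -> R) * ('I_n -> R))%type.

Definition degenerate (n : nat) (z : pt n) : Prop :=
  exists j : 'I_n, fst z j = snd z j.

(* Finite multisets are lists modulo permutation; Sp~ is the quotient by the
   equivalence relation generated by permutation and adding/removing a
   degenerate pair. *)
Inductive sp_equiv (n : nat) : list (pt n) -> list (pt n) -> Prop :=
  | sp_perm : forall l l', Permutation l l' -> sp_equiv l l'
  | sp_add_degen : forall d l, degenerate d -> sp_equiv l (d :: l)
  | sp_sym : forall l l', sp_equiv l l' -> sp_equiv l' l
  | sp_trans : forall l1 l2 l3, sp_equiv l1 l2 -> sp_equiv l2 l3 -> sp_equiv l1 l3.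

(* Elements of the group completion K(Sp~): pairs (X+, X-). *)
Definition Kel (n : nat) : Type := (list (pt n) * list (pt n))%type.

Definition K_equiv (n : nat) (X Y : Kel n) : Prop :=
  sp_equiv (fst X ++ snd Y) (fst Y ++ snd X).

Definition p_ab (n : nat) (a b : 'I_n -> nat) (X : list (pt n)) : R :=
  fold_right Rplus 0%R
    (map (fun z : pt n =>
            \big[Rmult/1%R]_(j < n)
              (((snd z j - fst z j) ^ (a j)) * ((snd z j + fst z j) ^ (b j)))%R)
         X).

Definition phi (n : nat) (X : Kel n) (a b : 'I_n -> nat) : R :=
  (p_ab a b (fst X) - p_ab a b (snd X))%R.

(* Main.v *)
Require Import Defs.
From mathcomp Require Import all_boot.
From Stdlib Require Import Reals List Permutation.
From HB Require Import structures.
From mathcomp Require Import zify.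
From Stdlib Require Import Classical FunctionalExtensionality Lra Lia.

HB.instance Definition _ := Monoid.isComLaw.Build R 1%R Rmult
  (fun x y z => esym (Rmult_assoc x y z)) Rmult_comm Rmult_1_l.

Section Aux.
Variable n : nat.
Local Open Scope R_scope.

Definition lsum (f : pt n -> R) (L : list (pt n)) : R :=
  fold_right Rplus 0 (List.map f L).

Lemma lsum_cons f w L : lsum f (w :: L) = f w + lsum f L.
Proof. by []. Qed.

Lemma lsum_cat f L M : lsum f (cat L M) = lsum f L + lsum f M.
Proof. elim: L => [|w L IH] /=; rewrite /lsum /=; [lra|rewrite /lsum in IH; lra]. Qed.

Lemma lsum_perm f L M : Permutation L M -> lsum f L = lsum f M.
Proof.
elim=> [|x l l' _ IH|x y l|l l' l'' _ IH1 _ IH2].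
- by [].
- rewrite /lsum /= in IH *; lra.
- rewrite /lsum /=; lra.
- by rewrite IH1.
Qed.

Arguments lsum_perm f {L M}.

Lemma lsum_ext f g L : (forall w, f w = g w) -> lsum f L = lsum g L.
Proof. move=> H; elim: L => [|w L IH] //; rewrite !lsum_cons H IH //. Qed.

Lemma lsum_lin f g c L : lsum (fun w => f w - c * g w) L = lsum f L - c * lsum g L.
Proof. elim: L => [|w L IH]; rewrite /lsum /=; [lra|rewrite /lsum in IH; lra]. Qed.

Definition uu (w : pt n) j := snd w j - fst w j.
Definition vv (w : pt n) j := snd w j + fst w j.

Definition mono w (a b : 'I_n -> nat) :=
  \big[Rmult/1]_(j < n) (uu w j ^ a j * vv w j ^ b j).

Definition FF w := \big[Rmult/1]_(j < n) uu w j.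

Definition incr (a : 'I_n -> nat) j := fun i => if i == j then (a i).+1 else a i.

Lemma big_delta (j : 'I_n) c : \big[Rmult/1]_(i < n) (if i == j then c else 1) = c.
Proof.
rewrite (bigD1 j) //= eqxx big1 ?Rmult_1_r // => i /negbTE -> //.
Qed.

Lemma mono_incr_a w a b j : mono w (incr a j) b = mono w a b * uu w j.
Proof.
rewrite /mono -[X in _ = _ * X](big_delta j (uu w j)) -big_split /=.
apply: eq_bigr => i _; rewrite /incr; case: eqP => [->|_] /=; ring.
Qed.

Lemma mono_incr_b w a b j : mono w a (incr b j) = mono w a b * vv w j.
Proof.
rewrite /mono -[X in _ = _ * X](big_delta j (vv w j)) -big_split /=.
apply: eq_bigr => i _; rewrite /incr; case: eqP => [->|_] /=; ring.
Qed.

Lemma mono0 w : mono w (fun _ => O) (fun _ => O) = 1%R.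
Proof. rewrite /mono big1 // => i _ /=; ring. Qed.

Definition Cls (G : pt n -> R) L M := forall a b,
  lsum (fun w => G w * mono w a b) L = lsum (fun w => G w * mono w a b) M.

Lemma Cls_u G L M j c : Cls G L M -> Cls (fun w => G w * (uu w j - c)) L M.
Proof.
move=> H a b.
have E : forall w, G w * (uu w j - c) * mono w a b =
   G w * mono w (incr a j) b - c * (G w * mono w a b).
  move=> w; rewrite mono_incr_a; ring.
rewrite (lsum_ext _ _ _ E) (lsum_ext _ _ M E) !lsum_lin H (H a b) //.
Qed.

Lemma Cls_v G L M j c : Cls G L M -> Cls (fun w => G w * (vv w j - c)) L M.
Proof.
move=> H a b.
have E : forall w, G w * (vv w j - c) * mono w a b =
   G w * mono w a (incr b j) - c * (G w * mono w a b).
  move=> w; rewrite mono_incr_b; ring.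
rewrite (lsum_ext _ _ _ E) (lsum_ext _ _ M E) !lsum_lin H (H a b) //.
Qed.

Lemma sep (q w0 : pt n) : q <> w0 ->
  exists j, uu q j <> uu w0 j \/ vv q j <> vv w0 j.
Proof.
move=> Hne; apply: NNPP => Hn; apply: Hne.
have E : forall j, fst q j = fst w0 j /\ snd q j = snd w0 j.
  move=> j; have [H1 H2] : uu q j = uu w0 j /\ vv q j = vv w0 j.
    split; apply: NNPP => H; apply: Hn; exists j; tauto.
  rewrite /uu /vv in H1 H2; split; lra.
case: q w0 E {Hn} => [q1 q2] [w1 w2] /= E.
f_equal; apply: functional_extensionality => j; case: (E j) => //.
Qed.

Arguments sep {q w0}.

Lemma sepG F L M w0 Q : Cls F L M -> F w0 <> 0 ->
  exists G, Cls G L M /\ G w0 <> 0 /\ forall q, In q Q -> q <> w0 -> G q = 0.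
Proof.
move=> HF H0; elim: Q => [|q Q [G [HG [HG0 HGq]]]].
  by exists F; split; [|split].
case: (classic (q = w0)) => [->|Hq].
  exists G; split; [|split] => // q' [<-|]; [by []|exact: HGq].
case: (sep Hq) => j [Hu|Hv].
- exists (fun w => G w * (uu w j - uu q j)); split; [exact: Cls_u|split].
  + apply: Rmult_integral_contrapositive; split => //; lra.
  + move=> q' [<- _|Hin Hne]; first ring.
    rewrite HGq //; ring.
- exists (fun w => G w * (vv w j - vv q j)); split; [exact: Cls_v|split].
  + apply: Rmult_integral_contrapositive; split => //; lra.
  + move=> q' [<- _|Hin Hne]; first ring.
    rewrite HGq //; ring.
Qed.

Arguments sepG {F L M w0} Q.

Lemma sum_zero G L : (forall q, In q L -> G q = 0) -> lsum G L = 0.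
Proof.
elim: L => [|w L IH] H //; rewrite lsum_cons H ?IH /=; [lra|move=> q Hq; apply: H; right=> //|left=> //].
Qed.

Lemma sum_pos G L c : (forall q, In q L -> G q = 0 \/ G q = c) ->
  exists k : nat, lsum G L = c * INR k.
Proof.
elim: L => [|w L IH] H; first by exists O; rewrite /= /lsum /=; ring.
case: IH => [q Hq|k Hk]; first by apply: H; right.
rewrite lsum_cons Hk.
case: (H w (or_introl erefl)) => ->.
  by exists k; ring.
by exists k.+1; rewrite S_INR; ring.
Qed.

Lemma key F L M w0 : Cls F L M -> F w0 <> 0 -> In w0 L -> In w0 M.
Proof.
move=> HF H0 Hin; apply: NNPP => Hout.
case: (sepG (cat L M) HF H0) => G [HG [HG0 HGq]].
have := HG (fun _ => O) (fun _ => O).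
rewrite (lsum_ext _ (fun w => G w) L); last by move=> w; rewrite mono0; ring.
rewrite (lsum_ext _ (fun w => G w) M); last by move=> w; rewrite mono0; ring.
rewrite (sum_zero G M); last first.
  move=> q Hq; apply: HGq.
  apply: in_or_app; right; exact: Hq.
  by move=> E; apply: Hout; rewrite -E.
have [k Hk] : exists k : nat, lsum G L = G w0 * INR k.+1.
  case: (in_split _ _ Hin) => l1 [l2 EL]; rewrite EL.
  have P := Permutation_middle l1 l2 w0.
  rewrite (lsum_perm G (Permutation_sym P)) lsum_cons.
  case: (sum_pos G (l1 ++ l2) (G w0)) => [q Hq|k Hk].
    case: (classic (q = w0)) => [->|Hne]; [by right|left].
    apply: HGq => //; apply: in_or_app; left; rewrite EL.
    case: (in_app_or _ _ _ Hq) => Hq'; apply: in_or_app; [left|right; right] => //.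
  by exists k; rewrite Hk S_INR; ring.
rewrite Hk => E.
have : INR k.+1 <> 0 by apply: not_0_INR.
move=> Hk0; apply: (Rmult_integral_contrapositive _ _ (conj HG0 Hk0)); exact: E.
Qed.

Arguments key {F L M w0}.

Lemma sp_cons (w : pt n) (L M : list (pt n)) : sp_equiv L M -> sp_equiv (w :: L) (w :: M).
Proof.
elim=> {L M}.
- by move=> l l' P; apply: sp_perm; apply: perm_skip.
- move=> d l Hd; apply: (sp_trans (l2 := d :: w :: l)).
  + exact: sp_add_degen.
  + apply: sp_perm; apply: perm_swap.
- by move=> l l' _ IH; apply: sp_sym.
- by move=> l1 l2 l3 _ IH1 _ IH2; apply: sp_trans IH1 IH2.
Qed.

Lemma FF_degen w : degenerate w -> FF w = 0.
Proof.
case=> j Hj; rewrite /FF (bigD1 j) //= /uu Hj; ring.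
Qed.

Lemma FF_nondegen w : ~ degenerate w -> FF w <> 0.
Proof.
move=> Hd; rewrite /FF; apply: (big_ind (fun x => x <> 0)).
- lra.
- by move=> x y Hx Hy; apply: Rmult_integral_contrapositive.
- move=> j _; rewrite /uu => E; apply: Hd; exists j; lra.
Qed.

Lemma remove_degen L M : Cls FF L M ->
  (exists d, In d L /\ degenerate d) ->
  exists L', sp_equiv L' L /\ Cls FF L' M /\ (length L' < length L)%coq_nat.
Proof.
move=> HC [d [Hin Hd]].
case: (in_split _ _ Hin) => l1 [l2 E]; subst L.
have P := Permutation_middle l1 l2 d.
exists (l1 ++ l2); split; [|split].
- apply: (sp_trans (l2 := d :: (l1 ++ l2))); first exact: sp_add_degen.
  apply: sp_perm; exact: P.
- move=> a b; rewrite -HC (lsum_perm _ (Permutation_sym P)) lsum_cons FF_degen //; ring.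
- rewrite !length_app /=; lia.
Qed.

Arguments remove_degen {L M}.

Lemma Cls_sym G L M : Cls G L M -> Cls G M L.
Proof. by move=> H a b; rewrite H. Qed.

Arguments Cls_sym {G L M}.

Lemma main_ind : forall k L M, (length L + length M <= k)%coq_nat ->
  Cls FF L M -> sp_equiv L M.
Proof.
elim=> [|k IH] L M Hk HC.
  case: L M Hk HC => [|? ?] [|? ?] /= Hk HC; try (exfalso; lia).
  by apply: sp_perm.
case: (classic (exists d, In d L /\ degenerate d)) => [HL|HL].
  case: (remove_degen HC HL) => L' [E [HC' Hl]].
  apply: sp_trans (sp_sym E) (IH L' M _ HC'); lia.
case: (classic (exists d, In d M /\ degenerate d)) => [HM|HM].
  case: (remove_degen (Cls_sym HC) HM) => M' [E [HC' Hl]].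
  apply: sp_sym; apply: sp_trans (sp_sym E) (IH M' L _ HC'); lia.
case: L Hk HC HL => [|w0 L'] Hk HC HL.
  case: M Hk HC HM => [|w1 M'] Hk HC HM; first by apply: sp_perm.
  exfalso; have : In w1 [::].
    apply: (key (Cls_sym HC)); last by left.
    by apply: FF_nondegen => Hd; apply: HM; exists w1; split; first left.
  by [].
have Hw0 : In w0 M.
  apply: (key HC); last by left.
  by apply: FF_nondegen => Hd; apply: HL; exists w0; split; first left.
case: (in_split _ _ Hw0) => m1 [m2 EM]; subst M.
have P := Permutation_middle m1 m2 w0.
apply: (sp_trans (l2 := w0 :: (m1 ++ m2)%list)); last exact: sp_perm P.
apply: sp_cons; apply: IH.
  move: Hk; rewrite /= !length_app /=; lia.
move=> a b; have := HC a b.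
rewrite (lsum_perm _ (Permutation_sym P)) !lsum_cons; lra.
Qed.

End Aux.
Arguments FF {n}. Arguments mono {n}. Arguments lsum {n}. Arguments uu {n}. Arguments vv {n}.
Arguments lsum_ext {n}. Arguments lsum_cat {n}.

Theorem lemma4p7 (n : nat) (hn : (1 <= n)%N) (X Y : Kel n) :
  ~ K_equiv X Y ->
  exists (a b : 'I_n -> nat),
    (forall j : 'I_n, (1 <= a j)%N) /\ phi X a b <> phi Y a b.
Proof.
move=> HK; apply: NNPP => Hno; apply: HK.
rewrite /K_equiv; apply: (@main_ind n (length (fst X ++ snd Y) + length (fst Y ++ snd X))%coq_nat); first exact: le_n.
move=> a b.
have E : forall L, p_ab (fun i => (a i).+1) b L = lsum (fun w => (FF w * mono w a b)%R) L.
  move=> L; rewrite /p_ab -/(lsum _ L); apply: lsum_ext => w.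
  rewrite /FF /mono -big_split /=; apply: eq_bigr => i _; rewrite /uu /vv /=; ring.
rewrite !lsum_cat -!E.
case: (Req_dec (phi X (fun i => (a i).+1) b) (phi Y (fun i => (a i).+1) b)) => Hp.
  rewrite /phi in Hp; lra.
exfalso; apply: Hno; exists (fun i => (a i).+1), b; split => //.
Qed.
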